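(* Let $p$ be a prime, let $G$ be a finite Abelian $p$-group, and let $S$ be a sequence over $G$ with $|S|=\mathsf{D}(G)+i-1$, where $i\ge 1$ is an integer. Then: (i) If $i\ge 2$ and $S$ contains a zero-sum subsequence $S'$ with $p\nmid |S'|$, then $S$ is dispersive. (ii) If $S$ contains no non-empty zero-sum subsequence $S'$ with $p\mid |S'|$, then $i\le p-1$, and $S$ contains at least $i$ non-empty zero-sum subsequences with pairwise distinct lengths.
   Context: A sequence over a finite Abelian group $G$ (written additively) is a finite multiset of elements of $G$; its length $|S|$ is the number of terms counted with multiplicity, and a subsequence is a sub-multiset. A zero-sum sequence is one whose terms sum to $0$. The Davenport constant $\mathsf{D}(G)$ is the smallest positive integer $t$ such that every sequence over $G$ of length at least $t$ contains a non-empty zero-sum subsequence. A sequence $S$ over $G$ is dispersive if it contains two non-empty zero-sum subsequences $S_1,S_2$ with $|S_1|\neq|S_2|$. *)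

(* Defs.v *)
From HB Require Import structures.
From mathcomp Require Import all_boot all_order all_algebra.
Set Implicit Arguments. Unset Strict Implicit. Unset Printing Implicit Defensive.
Import GRing.Theory.
Local Open Scope ring_scope.

(* A sequence over G is a [seq G] (viewed as a multiset); its subsequences
   (sub-multisets) are the [mask m S] for bit masks m. *)

Definition zero_sum (G : zmodType) (T : seq G) : bool := \sum_(x <- T) x == 0.

Definition davenport_prop (G : zmodType) (t : nat) : Prop :=
  forall S : seq G, (t <= size S)%N ->
    exists m : bitseq, mask m S != [::] /\ zero_sum (mask m S).

Definition is_davenport (G : zmodType) (d : nat) : Prop :=
  (0 < d)%N /\ davenport_prop G d /\
  forall t : nat, (0 < t)%N -> davenport_prop G t -> (d <= t)%N.

Definition dispersive (G : zmodType) (S : seq G) : Prop :=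
  exists m1 m2 : bitseq,
    [/\ mask m1 S != [::], zero_sum (mask m1 S),
        mask m2 S != [::], zero_sum (mask m2 S)
      & size (mask m1 S) != size (mask m2 S)].

(* Main.v *)
Require Import Defs.
From HB Require Import structures.
From mathcomp Require Import all_boot all_order all_algebra all_fingroup all_solvable all_field.
From mathcomp Require Import ring zify.
From Stdlib Require Import Classical FunctionalExtensionality.
Set Implicit Arguments. Unset Strict Implicit. Unset Printing Implicit Defensive.
Import GRing.Theory FinRing.Theory.
Local Open Scope ring_scope.

Definition dlt (G : zmodType) (R : zmodType) (w : G) (f : G -> R) : G -> R :=
  fun g => f g - f (g - w).
Definition shf (G : zmodType) (R : zmodType) (w : G) (f : G -> R) : G -> R :=
  fun g => f (g - w).
Definition dL (G : zmodType) (R : zmodType) (U : seq G) (f : G -> R) : G -> R :=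
  foldr (@dlt G R) f U.

Lemma binom_iter (G : zmodType) (R : comNzRingType) (x : G) (f : G -> R) n g :
  iter n (dlt x) f g =
  \sum_(0 <= k < n.+1) (-1) ^+ k * ('C(n, k))%:R * f (g - x *+ k).
Proof.
elim: n g => [|n IHn] g.
  by rewrite big_nat1 /= subr0 expr0 !mul1r.
rewrite iterS {1}/dlt !IHn.
rewrite [RHS]big_nat_recl // bin0 expr0 !mul1r subr0.
have -> : \sum_(0 <= i < n.+1) (-1) ^+ i.+1 * ('C(n.+1, i.+1))%:R * f (g - x *+ i.+1)
  = \sum_(0 <= i < n.+1) (-1) ^+ i.+1 * ('C(n, i.+1))%:R * f (g - x *+ i.+1)
    - \sum_(0 <= k < n.+1) (-1) ^+ k * ('C(n, k))%:R * f (g - x - x *+ k).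
  rewrite -sumrN -big_split; apply: eq_bigr => k _ /=.
  rewrite binS natrD exprS mulrS opprD addrA; ring.
rewrite addrA; congr (_ - _).
rewrite [LHS]big_nat_recl // bin0 expr0 !mul1r subr0; congr (_ + _).
rewrite [RHS]big_nat_recr //= bin_small // mulr0 mul0r addr0.
by [].
Qed.

Lemma iter_mulnE (T : Type) (F : T -> T) m n y :
  iter (m * n) F y = iter m (iter n F) y.
Proof. by elim: m => [|m IH] //=; rewrite mulSn iterD IH. Qed.

Lemma frob_dlt (G : zmodType) (R : comNzRingType) p (x : G) (f : G -> R) :
  prime p -> p \in [pchar R] -> iter p (dlt x) f = dlt (x *+ p) f.
Proof.
move=> pp chp; apply: functional_extensionality => g.
have p0 := prime_gt0 pp.
move: pp chp; rewrite -(prednK p0); set q := p.-1 => pp chp.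
rewrite binom_iter big_nat_recl // big_nat_recr //= bin0 binn expr0 !mul1r mulr1 subr0.
rewrite big1_seq ?add0r; last first.
  move=> k /andP[_]; rewrite mem_iota add0n => /andP[_ kp].
  have /dvdnP[r ->] : (q.+1 %| 'C(q.+1, k.+1))%N.
    by apply: prime_dvd_bin => //; rewrite /= ltnS -(subn0 q).
  by rewrite natrM (pcharf0 chp) !mulr0 mul0r.
rewrite /dlt; congr (_ + _).
case: (even_prime pp) => [p2|op].
  have h : (-1 : R) = 1.
    have h2 : (1 + 1 : R) = 0 by rewrite -(pcharf0 chp) p2.
    by apply/eqP; rewrite -subr_eq0 -opprD oppr_eq0 h2.
  by rewrite h expr1n mul1r -mulN1r h mul1r.
by rewrite -signr_odd op expr1 mulN1r.
Qed.

Lemma frob_pow (G : zmodType) (R : comNzRingType) p (x : G) (f : G -> R) a :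
  prime p -> p \in [pchar R] -> iter (p ^ a)%N (dlt x) f = dlt (x *+ (p ^ a)%N) f.
Proof.
move=> pp chp; elim: a x f => [|a IH] x f.
  by rewrite expn0 /= mulr1n.
rewrite expnS iter_mulnE.
have -> : iter (p ^ a)%N (@dlt G R x) = dlt (x *+ (p ^ a)%N).
  by apply functional_extensionality; intro h; rewrite IH.
by rewrite frob_dlt // mulnC mulrnA.
Qed.

Lemma funeqP (A B : Type) (f h : A -> B) : (forall x, f x = h x) -> f = h.
Proof. exact: functional_extensionality. Qed.

Section Ops.
Variables (G : zmodType) (R : comNzRingType).
Implicit Types (f h : G -> R) (a b : G) (U : seq G).

Definition zf : G -> R := fun _ => 0.

Lemma dlt_comm a b f : dlt a (dlt b f) = dlt b (dlt a f).
Proof.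
apply: funeqP => g; rewrite /dlt.
by rewrite [g - a - b]addrAC; ring.
Qed.

Lemma dL_dlt U a f : dL U (dlt a f) = dlt a (dL U f).
Proof. by elim: U => //= y U IH; rewrite IH dlt_comm. Qed.

Lemma dlt_zf a : dlt a zf = zf.
Proof. by apply: funeqP => g; rewrite /dlt /zf subr0. Qed.

Lemma dL_zf U : dL U zf = zf.
Proof. by elim: U => //= y U ->; rewrite dlt_zf. Qed.

Lemma iter_zf n a : iter n (dlt a) zf = zf.
Proof. by elim: n => //= n ->; rewrite dlt_zf. Qed.

Lemma dlt0 f : dlt 0 f = zf.
Proof. by apply: funeqP => g; rewrite /dlt subr0 subrr. Qed.

Lemma dltD a b f : dlt (a + b) f = fun g => dlt a f g + shf a (dlt b f) g.
Proof.
apply: funeqP => g; rewrite /dlt /shf opprD addrA; ring.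
Qed.

Lemma dlt_sub a f h : dlt a (fun g => f g - h g) = fun g => dlt a f g - dlt a h g.
Proof.
apply: funeqP => g; rewrite /dlt.
by ring.
Qed.

Lemma dL_sub U f h : dL U (fun g => f g - h g) = fun g => dL U f g - dL U h g.
Proof. by elim: U => //= y U ->; rewrite dlt_sub. Qed.

Lemma dlt_shf a b f : dlt a (shf b f) = shf b (dlt a f).
Proof.
apply: funeqP => g; rewrite /dlt /shf.
by rewrite addrAC.
Qed.

Lemma dL_shf U b f : dL U (shf b f) = shf b (dL U f).
Proof. by elim: U => //= y U ->; rewrite dlt_shf. Qed.

Lemma shf_zf b : shf b zf = zf.
Proof. by []. Qed.

Lemma dL_count U x f :
  dL U f = dL (filter (predC1 x) U) (iter (count_mem x U) (dlt x) f).
Proof.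
elim: U => //= y U IH; rewrite IH.
have [->|ne] := eqVneq y x.
  by rewrite /= add0n dL_dlt.
by [].
Qed.

End Ops.

Lemma pigeon (G : eqType) (b : seq G) (ord : G -> nat) (U : seq G) :
  all (mem b) U -> (forall x, x \in b -> count_mem x U < ord x)%N ->
  (size U <= \sum_(x <- b) (ord x).-1)%N.
Proof.
elim: b U => [|x b IH] U.
  by case: U.
move=> aU hc; rewrite big_cons -(count_predC (pred1 x) U) -[count (predC _) U]size_filter.
apply: leq_add.
  by move: (hc x (mem_head _ _)); case: (ord x).
apply: IH.
  apply/allP => y; rewrite mem_filter => /andP[/= ne yU].
  by move/allP: aU => /(_ y yU); rewrite inE => /orP[/eqP e|//]; rewrite e eqxx in ne.
move=> y yb; apply: leq_ltn_trans (hc y _); last by rewrite inE yb orbT.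
exact/leq_count_subseq/filter_subseq.
Qed.


Lemma core (G : zmodType) (R : comNzRingType) p (b : seq G) (ord : G -> nat) :
  prime p -> p \in [pchar R] ->
  (forall x, x \in b -> exists a, ord x = (p ^ a)%N /\ x *+ ord x = 0) ->
  (forall g, exists L, all (mem b) L /\ g = \sum_(y <- L) y) ->
  forall W U (f : G -> R), all (mem b) U ->
    (\sum_(x <- b) (ord x).-1 < size W + size U)%N -> dL W (dL U f) = (fun _ => 0).
Proof.
move=> pp chp hord hgen; elim=> [|w W IH] U f aU /=.
  rewrite add0n => hs.
  have [/hasP[x xb le]|nh] := boolP (has (fun x => ord x <= count_mem x U)%N b).
    rewrite (dL_count U x) -(subnK le) iterD.
    have [a [oa ox]] := hord x xb.
    rewrite oa frob_pow // -oa ox dlt0.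
    by rewrite iter_zf dL_zf.
  exfalso; move: hs; rewrite ltnNge (pigeon aU) // => y yb.
  by rewrite ltnNge; apply: contra nh => h; apply/hasP; exists y.
move=> hs.
have [L [aL ->]] := hgen w.
elim: L aL => [|y L IHL] aL.
  by rewrite big_nil dlt0.
move: aL => /= /andP[yb aL].
rewrite big_cons dltD IHL //.
apply: funeqP => g; rewrite /shf /zf addr0.
rewrite -dL_dlt (_ : dlt y (dL U f) = dL (y :: U) f) // IH //=; first by rewrite yb.
by rewrite addnS -addSn.
Qed.

Fixpoint Sw (G : zmodType) (R : comNzRingType) (W : seq G) (phi : nat -> R) : G -> R :=
  match W with
  | [::] => fun g => (g == 0)%:R * phi 0%N
  | w :: W' => fun g => Sw W' phi g - Sw W' (fun n => phi n.+1) (g - w)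
  end.

Fixpoint Pol (R : zmodType) (j : nat) (phi : nat -> R) : Prop :=
  match j with
  | 0 => forall n, phi n = 0
  | j'.+1 => Pol j' (fun n => phi n.+1 - phi n)
  end.

Section SwPol.
Variables (G : zmodType) (R : comNzRingType).
Implicit Types (phi psi : nat -> R) (W U : seq G).

Lemma Sw_sub W phi psi :
  Sw W (fun n => phi n - psi n) = fun g => Sw W phi g - Sw W psi g.
Proof.
elim: W phi psi => [|w W IH] phi psi; apply: funeqP => g /=.
  by rewrite mulrBr.
rewrite IH (IH (fun n => phi n.+1)); ring.
Qed.

Lemma Sw_zero W phi : (forall n, phi n = 0) -> Sw W phi = fun _ => 0.
Proof.
elim: W phi => [|w W IH] phi h; apply: funeqP => g /=.
  by rewrite h mulr0.
by rewrite IH // IH // subr0.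
Qed.

Lemma Sw_step w W phi :
  Sw (w :: W) phi = fun g => dlt w (Sw W phi) g - shf w (Sw W (fun n => phi n.+1 - phi n)) g.
Proof.
apply: funeqP => g /=; rewrite Sw_sub /dlt /shf; ring.
Qed.

Lemma Sw_ext W phi psi g :
  (forall m, \sum_(x <- mask m W) x = g -> phi (size (mask m W)) = psi (size (mask m W))) ->
  Sw W phi g = Sw W psi g.
Proof.
elim: W phi psi g => [|w W IH] phi psi g h /=.
  have [e|] := eqVneq g 0; last by rewrite !mul0r.
  by rewrite (h [::]) // big_nil e.
congr (_ - _).
  by apply: IH => m hm; apply: (h (false :: m)).
apply: IH => m hm; apply: (h (true :: m)) => /=.
by rewrite big_cons hm addrC subrK.
Qed.

Lemma Sw_delta W (c : R) g :
  Sw W (fun n => if n == 0%N then c else 0) g = (g == 0)%:R * c.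
Proof.
elim: W g => [|w W IH] g /=; first by [].
by rewrite IH Sw_zero // subr0.
Qed.

Lemma Pol_ext j phi psi : (forall n, phi n = psi n) -> Pol j phi -> Pol j psi.
Proof.
elim: j phi psi => [|j IH] phi psi h /=; first by move=> H n; rewrite -h H.
by apply: IH => n; rewrite !h.
Qed.

Lemma Pol_add j phi psi : Pol j phi -> Pol j psi -> Pol j (fun n => phi n + psi n).
Proof.
elim: j phi psi => [|j IH] phi psi /=; first by move=> h1 h2 n; rewrite h1 h2 addr0.
move=> h1 h2; apply: Pol_ext (IH _ _ h1 h2) => n; ring.
Qed.

Lemma Pol_mono j phi : Pol j phi -> Pol j.+1 phi.
Proof.
elim: j phi => [|j IH] phi /=; first by move=> h n; rewrite !h subr0.
by move=> h; apply: IH.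
Qed.

Lemma Pol_monoL j k phi : (j <= k)%N -> Pol j phi -> Pol k phi.
Proof.
move=> le h; rewrite -(subnK le); elim: (k - j)%N => [|d IH] //=.
exact: Pol_mono.
Qed.

Lemma Pol_shift j phi : Pol j phi -> Pol j (fun n => phi n.+1).
Proof.
case: j => [|j] /=; first by move=> h n; rewrite h.
move=> h; have h2 := Pol_add (Pol_mono h) h.
apply: Pol_ext h2 => n /=; ring.
Qed.

Lemma Pol_const (c : R) : Pol 1 (fun _ => c).
Proof. by move=> n; rewrite subrr. Qed.

Lemma Pol_mul j phi (a : R) : Pol j phi -> Pol j.+1 (fun n => (n%:R + a) * phi n).
Proof.
elim: j phi => [|j IH] phi /=; first by move=> h n; rewrite !h !mulr0 subr0.
move=> h.
have h2 := Pol_add (IH _ h) (Pol_shift (h : Pol j.+1 phi)).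
apply: Pol_ext h2 => n /=; rewrite -natr1; ring.
Qed.

End SwPol.

Lemma Sw_main (G : zmodType) (R : comNzRingType) (D : nat) :
  (forall (U : seq G) (f : G -> R), (D <= size U)%N -> dL U f = fun _ => 0) ->
  forall (W : seq G) j (U : seq G) (phi : nat -> R), Pol j.+1 phi -> (D + j <= size U + size W)%N ->
    dL U (Sw W phi) = fun _ => 0.
Proof.
move=> hcore; elim=> [|w W IH] j U phi hP hs.
  apply: hcore; rewrite addn0 in hs; exact: leq_trans (leq_addr _ _) hs.
rewrite Sw_step dL_sub.
have e1 : dL U (fun g => dlt w (Sw W phi) g) = fun _ => 0.
  rewrite (_ : (fun g => dlt w (Sw W phi) g) = dlt w (Sw W phi)) //.
  rewrite dL_dlt; apply: (IH j (w :: U)) => //=.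
  by rewrite addSn -addnS.
have e2 : dL U (fun g => shf w (Sw W (fun n => phi n.+1 - phi n)) g) = fun _ => 0.
  rewrite (_ : (fun g => _) = shf w (Sw W (fun n => phi n.+1 - phi n))) //.
  rewrite dL_shf; case: j hP hs => [|j] hP hs.
    by rewrite Sw_zero // dL_zf.
  rewrite (IH j U) //; rewrite /= !addnS ltnS in hs; exact: hs.
by rewrite e1 e2; apply: funeqP => g; rewrite subr0.
Qed.

Lemma Pol_pow (R : comNzRingType) k : Pol k.+1 (fun n => (n%:R : R) ^+ k).
Proof.
elim: k => [|k IH]; first exact: Pol_const.
apply: Pol_ext (Pol_mul 0 IH) => n /=; by rewrite addr0 exprS.
Qed.

Lemma Pol_prod (R : comNzRingType) (s : seq nat) :
  Pol (size s).+1 (fun n => \prod_(l <- s) ((n%:R : R) - l%:R)).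
Proof.
elim: s => [|l s IH] /=.
  by apply: Pol_ext (Pol_const 1) => n; rewrite big_nil.
by apply: Pol_ext (Pol_mul (- l%:R) IH) => n; rewrite big_cons.
Qed.

Lemma sum_nseq (G : zmodType) (x : G) n : \sum_(y <- nseq n x) y = x *+ n.
Proof. by elim: n => [|n IH]; rewrite ?big_nil // big_cons IH mulrS. Qed.

Lemma mask_catg (T : Type) (m : bitseq) (s1 s2 : seq T) :
  mask m (s1 ++ s2) = mask (take (size s1) m) s1 ++ mask (drop (size s1) m) s2.
Proof.
elim: s1 m => [|x s1 IH] [|c m] //=.
by rewrite IH; case: c.
Qed.

Definition Tseq (G : finZmodType) (b : seq G) : seq G :=
  flatten [seq nseq (#[x]%g).-1 x | x <- b].

Lemma Tseq_cons (G : finZmodType) (x : G) b : Tseq (x :: b) = nseq (#[x]%g).-1 x ++ Tseq b.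
Proof. by []. Qed.

Lemma all_Tseq (G : finZmodType) (b : seq G) : all (mem b) (Tseq b).
Proof.
elim: b => [|x b IH] //; rewrite Tseq_cons all_cat all_nseq (_ : mem (x :: b) x) ?orbT /=; last exact: mem_head.
by apply: sub_all IH => y /= yb; rewrite inE yb orbT.
Qed.

Lemma sum_in_group (G : finZmodType) (H : {group G}) (L : seq G) :
  all (mem H) L -> \sum_(y <- L) y \in H.
Proof.
elim: L => [|y L IH] /=; first by rewrite big_nil -zmod1gE group1.
move=> /andP[yH aL]; rewrite big_cons.
by rewrite -zmodMgE groupM // IH.
Qed.

Lemma basis_props (G : finZmodType) (b : seq G) (K : {group G}) :
  \big[dprod/1%g]_(x <- b) <[x]>%g = K ->
  [/\ (forall g, g \in K -> exists L, all (mem b) L /\ g = \sum_(y <- L) y),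
      (forall y, y \in b -> y \in K) &
      (forall m, zero_sum (mask m (Tseq b)) -> mask m (Tseq b) = [::])].
Proof.
elim: b K => [|x b IH] K.
  rewrite big_nil => <-; split => //.
    by move=> g; rewrite in_set1 => /eqP ->; exists [::]; rewrite big_nil.
  by move=> m; rewrite /= mask0.
rewrite big_cons => dK.
have [[Kx H' eKx eH'] eKH cH tiKH] := dprodP dK.
have [IH1 IH2 IH3] := IH H' eH'.
have xK : x \in K.
  by rewrite -eKH -[x in x \in _]mulg1 mem_mulg ?cycle_id // eH' group1.
have sH'K : forall h, h \in H' -> h \in K.
  by move=> h hH; rewrite -eKH -[h in h \in _]mul1g mem_mulg ?group1 // eH'.
split.
- move=> g; rewrite -eKH => /mulsgP[a h ha hh ->].
  case/cycleP: ha => i ->.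
  rewrite eH' in hh; have [L [aL ->]] := IH1 h hh.
  exists (nseq i x ++ L); split.
    rewrite all_cat all_nseq (_ : mem (x :: b) x) ?orbT /=; last exact: mem_head.
    by apply: sub_all aL => y /= yb; rewrite inE yb orbT.
  by rewrite big_cat sum_nseq /= zmodMgE zmodXgE.
- move=> y; rewrite inE => /orP[/eqP -> //|yb].
  by apply: sH'K; exact: IH2.
move=> m; rewrite Tseq_cons mask_catg /zero_sum big_cat /=.
set m1 := mask _ _; set m2 := mask _ (Tseq b) => hz.
have e1 : m1 = nseq (size m1) x.
  apply/all_pred1P/allP => y /mem_mask; rewrite mem_nseq => /andP[_ /eqP ->].
  by rewrite /= eqxx.
have sm1 : (size m1 < #[x]%g)%N.
  apply: leq_ltn_trans (size_subseq (mask_subseq _ _)) _.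
  by rewrite size_nseq prednK ?order_gt0.
have s2H : \sum_(y <- m2) y \in H'.
  apply: sum_in_group; apply/allP => y /mem_mask yT.
  have := allP (all_Tseq b) y yT => /= yb.
  exact: IH2.
have s2x : \sum_(y <- m2) y \in <[x]>%g.
  have -> : \sum_(y <- m2) y = ((x ^+ size m1)^-1)%g.
    rewrite zmodVgE zmodXgE; apply/eqP; rewrite -addr_eq0 addrC -sum_nseq -e1.
    exact: hz.
  by rewrite groupV mem_cycle.
have s20 : \sum_(y <- m2) y = 0.
  have : \sum_(y <- m2) y \in (1%g : {set G}) by rewrite -tiKH inE s2x eH' s2H.
  by move/set1P.
have c0 : size m1 = 0%N.
  move: hz; rewrite s20 addr0 {1}e1 sum_nseq -zmodXgE -zmod1gE => /eqP.
  move/eqP; rewrite -order_dvdn => /dvdn_leq; case: (size m1) sm1 => //= n.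
  by move=> lt /(_ isT); rewrite leqNgt lt.
rewrite e1 c0 /=; apply: IH3; exact/eqP.
Qed.


Lemma Fp_nat_eq0 p l : prime p -> ((l%:R : 'F_p) == 0) = (p %| l)%N.
Proof.
move=> pp; apply/eqP/idP => [h|].
  by have := val_Fp_nat pp l; rewrite h /dvdn => <-.
by move=> /eqP h; rewrite -Fp_nat_mod // h.
Qed.

Lemma Fp_fermat p (x : 'F_p) : prime p -> x != 0 -> x ^+ p.-1 = 1.
Proof.
move=> pp nz; apply: (mulfI nz); rewrite mulr1 -exprS prednK ?prime_gt0 //.
by have := expf_card x; rewrite card_Fp.
Qed.

Local Close Scope ring_scope.

Theorem corollary2p4 (p : nat) (G : finZmodType) (D : nat) (S : seq G) (i : nat) :
  prime p -> p.-nat #|G| -> is_davenport G D ->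
  (1 <= i)%N -> size S = (D + i - 1)%N ->
  (* (i) *)
  ((2 <= i)%N ->
     (exists m : bitseq, zero_sum (mask m S) /\ ~~ (p %| size (mask m S))) ->
     dispersive S)
  /\
  (* (ii) *)
  ((forall m : bitseq, mask m S != [::] -> zero_sum (mask m S) ->
       ~~ (p %| size (mask m S))) ->
     (i <= p - 1)%N /\
     exists ms : seq bitseq,
       [/\ size ms = i,
           all (fun m => (mask m S != [::]) && zero_sum (mask m S)) ms
         & uniq [seq size (mask m S) | m <- ms]]).
Proof.
Local Open Scope ring_scope.
move=> pp pG [D0 [Ddav _]] i1 hS.
have chp : p \in [pchar 'F_p] := pchar_Fp pp.
have [b defG _] := abelian_structure (zmod_abelian [set: G]).
have [gen inK zsf] := basis_props defG.
have hord : forall x, x \in b -> exists a, #[x]%g = (p ^ a)%N /\ x *+ #[x]%g = 0.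
  move=> x _; exists (logn p #[x]%g); split.
    have px : p.-nat #[x]%g.
      apply: pnat_dvd (order_dvdG (in_setT x)) _; by rewrite cardsT.
    by rewrite -p_part part_pnat_id.
  by rewrite -zmodXgE expg_order.
have hgen : forall g, exists L, all (mem b) L /\ g = \sum_(y <- L) y.
  by move=> g; apply: gen; rewrite in_setT.
have lowD : (\sum_(x <- b) (#[x]%g).-1 < D)%N.
  rewrite ltnNge; apply/negP => le.
  have sT : size (Tseq b) = \sum_(x <- b) (#[x]%g).-1.
    elim: (b) => [|x b' IH]; first by rewrite big_nil.
    by rewrite Tseq_cons size_cat size_nseq IH big_cons.
  have hle : (D <= size (Tseq b))%N by rewrite sT.
  have [m [ne zs]] := Ddav _ hle.
  by move: ne; rewrite zsf ?eqxx.
have hcore : forall (U : seq G) (f : G -> 'F_p), (D <= size U)%N -> dL U f = fun _ => 0.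
  move=> U f le.
  have := @core G 'F_p p b (fun x => #[x]%g) pp chp hord hgen U [::] f isT.
  by rewrite addn0; move/(_ (leq_trans lowD le)).
have hSw : forall k (phi : nat -> 'F_p), Pol k.+1 phi -> (k < i)%N -> Sw S phi 0 = 0.
  move=> k phi hP ki.
  have e := @Sw_main G 'F_p D hcore S k [::] phi hP.
  have e2 : (D + k <= size ([::] : seq G) + size S)%N by rewrite /= hS; lia.
  by have := congr1 (fun h : G -> _ => h 0) (e e2).
have Fnz : forall l, ~~ (p %| l)%N -> (l%:R : 'F_p) != 0 by move=> l; rewrite Fp_nat_eq0.
have step : forall ls : seq nat, (size ls < i)%N -> all (fun l => ~~ (p %| l)%N) ls ->
   exists m, [/\ mask m S != [::], zero_sum (mask m S) & size (mask m S) \notin ls].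
  move=> ls sl al; apply: NNPP => hno.
  pose phi := fun n : nat => \prod_(l <- ls) ((n%:R : 'F_p) - l%:R).
  have e := hSw (size ls) phi (Pol_prod _ ls) sl.
  rewrite (@Sw_ext _ _ S phi (fun n => if n == 0%N then phi 0%N else 0)) in e; last first.
    move=> m sm; case: eqP => [->//|/eqP nz].
    apply/eqP; rewrite prodf_seq_eq0; apply/hasP.
    have li : size (mask m S) \in ls.
      apply: NNPP => nin; apply: hno; exists m; split.
      - by apply: contra nz => /eqP ->.
      - by rewrite /zero_sum sm.
      - by apply/negP.
    by exists (size (mask m S)) => //=; rewrite subrr.
  rewrite Sw_delta eqxx mul1r in e.
  move/eqP: e; rewrite prodf_seq_eq0 => /hasP[l li /=]; rewrite sub0r oppr_eq0.
  by move: (allP al l li) => /Fnz /negbTE ->.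
split.
  move=> i2 [m0 [zs0 nd0]].
  have a1 : all (fun l => ~~ (p %| l)%N) [:: size (mask m0 S)] by rewrite /= nd0.
  have [m [ne zs nin]] := step [:: size (mask m0 S)] i2 a1.
  exists m0, m; split => //.
    by apply: contra nd0 => /eqP ->; rewrite dvdn0.
  by move: nin; rewrite inE eq_sym.
move=> H; split.
  rewrite leqNgt; apply/negP => pi.
  pose phi := fun n : nat => (n%:R : 'F_p) ^+ p.-1 - 1.
  have hP : Pol p.-1.+1 phi.
    by apply: Pol_ext (Pol_add (Pol_pow _ p.-1) (Pol_monoL _ (Pol_const (-1)))).
  have pi' : (p.-1 < i)%N by move: pi; rewrite subn1.
  have e := hSw p.-1 phi hP pi'.
  rewrite (@Sw_ext _ _ S phi (fun n => if n == 0%N then -1 else 0)) in e; last first.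
    move=> m sm; case: eqP => [->|/eqP nz].
      rewrite /phi expr0n /=; case: eqP => [h|_]; last by rewrite sub0r.
      by move: (prime_gt1 pp); rewrite -(prednK (prime_gt0 pp)) h.
    have nd : ~~ (p %| size (mask m S))%N.
      apply: H; first by apply: contra nz => /eqP ->.
      by rewrite /zero_sum sm.
    by rewrite /phi Fp_fermat ?subrr // Fnz.
  rewrite Sw_delta eqxx mul1r in e.
  by move/eqP: e; rewrite oppr_eq0 oner_eq0.
suff : forall k, (k <= i)%N -> exists ms : seq bitseq,
    [/\ size ms = k, all (fun m => (mask m S != [::]) && zero_sum (mask m S)) ms
      & uniq [seq size (mask m S) | m <- ms]].
  by move/(_ i (leqnn i)).
elim=> [|k IH] ki; first by exists [::].
have [ms [sz al un]] := IH (ltnW ki).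
have al' : all (fun l => ~~ (p %| l)%N) [seq size (mask m S) | m <- ms].
  apply/allP => l /mapP[m' m'ms ->].
  by move/allP: al => /(_ m' m'ms) /andP[ne' zs']; apply: H.
have sl : (size [seq size (mask m S) | m <- ms] < i)%N by rewrite size_map sz.
have [m [ne zs nin]] := step [seq size (mask m S) | m <- ms] sl al'.
exists (m :: ms); split => /=; [by rewrite sz | by rewrite ne zs al | by rewrite nin un].
Qed.
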